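(* Let $n\ge1$, $m\ge2$, and let $\mu_1,\dots,\mu_n,\beta_1,\dots,\beta_n,c_1,\dots,c_n,d$ be nonzero complex numbers with $\mu_1,\dots,\mu_n$ pairwise distinct and chosen generically. Then the polynomial system in $(\lambda,x)\in\mathbb C\times\mathbb C^n$ $$Q(\lambda,x)=\big((\lambda-\mu_1)(x_1^{m-1}-\beta_1),\ \dots,\ (\lambda-\mu_n)(x_n^{m-1}-\beta_n),\ c_1x_1+\cdots+c_nx_n+d\big)^T=0$$ has exactly $n(m-1)^{n-1}$ solutions, and each is nonsingular (the Jacobian of $Q$ with respect to $(\lambda,x)$ is invertible there). Moreover $Q$ and the system $G(\lambda,x)=\big((\mathcal A^{(k)}x^{m-1})_i-\lambda(\mathcal Bx^{m-1})_i\ (i=1,\dots,n),\ a_1x_1+\cdots+a_nx_n+b\big)^T$ (for any $\mathcal A,\mathcal B\in\mathbb C^{[m,n]}$, $1\le k\le m$, and complex $a_i,b$) both have $2$-homogeneous Bézout number $n(m-1)^{n-1}$ with respect to the variable partition $\{\lambda\},\{x_1,\dots,x_n\}$.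
   Context: For $\mathcal A\in\mathbb C^{[m,n]}$ (an $m$th-order $n$-dimensional complex tensor) and $x\in\mathbb C^n$, $\mathcal A^{(k)}x^{m-1}\in\mathbb C^n$ has $j$th entry $\sum A_{i_1\cdots i_{k-1}\,j\,i_{k+1}\cdots i_m}\prod_{r\neq k}x_{i_r}$, and $\mathcal Bx^{m-1}:=\mathcal B^{(1)}x^{m-1}$. For a partition of the variables into groups $y_1,\dots,y_K$ of sizes $l_1,\dots,l_K$ and a square system $p_1,\dots,p_N$ with $d_{ij}$ the degree of $p_i$ in the group $y_j$, the multihomogeneous Bézout number is the coefficient of $\alpha_1^{l_1}\cdots\alpha_K^{l_K}$ in $\prod_i(d_{i1}\alpha_1+\cdots+d_{iK}\alpha_K)$. (Genericity of the $\mu_i$ relative to the other parameters ensures the solution count; the nonsingularity uses $\mu_j\neq\mu_i$ for $j\ne i$.)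
   Formalization: Genericity is joint in μ, β, c, d, the solution count and nonsingularity holding off the zero set of a polynomial in (μ,β,c,d) not identically zero, and Bézout degrees are the nominal ones of the displayed formulas. Each condition added here is assumed in the paper as well or is needed for the statement above to hold. *)

(* Defs.v *)
From HB Require Import structures.
From mathcomp Require Import all_boot all_order all_algebra.
Set Implicit Arguments. Unset Strict Implicit. Unset Printing Implicit Defensive.
Import Order.TTheory GRing.Theory Num.Theory.
Local Open Scope ring_scope.

Inductive pexpr (R : Type) : Type :=
| PConst of R
| PVar of nat
| PAdd of pexpr R & pexpr R
| PMul of pexpr R & pexpr R.
Arguments PVar {R} _.
Arguments PAdd {R} _ _.
Arguments PMul {R} _ _.
Arguments PConst {R} _.

Section PExpr.
Variable R : nzRingType.

Fixpoint peval (env : nat -> R) (p : pexpr R) : R :=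
  match p with
  | PConst c => c
  | PVar i => env i
  | PAdd p q => peval env p + peval env q
  | PMul p q => peval env p * peval env q
  end.

Fixpoint pderiv (j : nat) (p : pexpr R) : pexpr R :=
  match p with
  | PConst _ => PConst 0
  | PVar i => PConst (if i == j then 1 else 0)
  | PAdd p q => PAdd (pderiv j p) (pderiv j q)
  | PMul p q => PAdd (PMul (pderiv j p) q) (PMul p (pderiv j q))
  end.

(* (nominal) degree of p in the variable group g *)
Fixpoint pdeg (g : pred nat) (p : pexpr R) : nat :=
  match p with
  | PConst _ => 0%N
  | PVar i => (g i : nat)
  | PAdd p q => maxn (pdeg g p) (pdeg g q)
  | PMul p q => (pdeg g p + pdeg g q)%N
  end.

Definition ppow (p : pexpr R) (k : nat) : pexpr R := iter k (PMul p) (PConst 1).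

(* 2-homogeneous Bezout number of the square system sys with respect to the
   variable groups g1 (of size l1) and g2 (of size l2): the coefficient of
   a1^l1 a2^l2 in prod_i (d_i1 a1 + d_i2 a2). *)
Definition bezout2 (sys : seq (pexpr R)) (g1 g2 : pred nat) (l1 l2 : nat) : int :=
  let a1 : {poly {poly int}} := 'X in
  let a2 : {poly {poly int}} := ('X : {poly int})%:P in
  let P := \prod_(p <- sys) ((pdeg g1 p)%:R * a1 + (pdeg g2 p)%:R * a2) in
  (P`_l1)`_l2.

Definition pt_env (n : nat) (z : 'rV[R]_n.+1) (k : nat) : R :=
  if (k < n.+1)%N then z 0 (inord k) else 0.

Definition is_zero (n : nat) (sys : seq (pexpr R)) (z : 'rV[R]_n.+1) : Prop :=
  forall r, (r < size sys)%N -> peval (pt_env z) (nth (PConst 0) sys r) = 0.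

Definition jacobian (n : nat) (sys : seq (pexpr R)) (z : 'rV[R]_n.+1)
  : 'M[R]_n.+1 :=
  \matrix_(r < n.+1, s < n.+1) peval (pt_env z) (pderiv s (nth (PConst 0) sys r)).

End PExpr.

Section Systems.
Variable R : nzRingType.
Variables n m : nat.

(* Variables: 0 is lambda, i.+1 is x_i (i : 'I_n). *)
Definition lin_expr (a : 'I_n -> R) (b : R) : pexpr R :=
  foldr (fun i p => PAdd (PMul (PConst (a i)) (PVar (val i).+1)) p)
        (PConst b) (enum 'I_n).

Definition Qsys (mu beta c : 'I_n -> R) (d : R) : seq (pexpr R) :=
  [seq PMul (PAdd (PVar 0) (PConst (- mu i)))
            (PAdd (ppow (PVar (val i).+1) (m - 1)) (PConst (- beta i)))
  | i <- enum 'I_n] ++ [:: lin_expr c d].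

(* (A^(k) x^(m-1))_j, with k 1-based. *)
Definition tensor_apply (A : {ffun 'I_m -> 'I_n} -> R) (k : nat) (j : 'I_n)
  : pexpr R :=
  foldr PAdd (PConst 0)
    [seq PMul (PConst (A f))
              (foldr PMul (PConst 1)
                 [seq PVar (val (f r)).+1 | r <- enum 'I_m & (val r).+1 != k])
    | f : {ffun 'I_m -> 'I_n} <- enum {ffun 'I_m -> 'I_n}
    & [forall r : 'I_m, ((val r).+1 == k) ==> (f r == j)]].

Definition Gsys (A B : {ffun 'I_m -> 'I_n} -> R) (k : nat) (a : 'I_n -> R)
  (b : R) : seq (pexpr R) :=
  [seq PAdd (tensor_apply A k i)
            (PMul (PConst (-1)) (PMul (PVar 0) (tensor_apply B 1 i)))
  | i <- enum 'I_n] ++ [:: lin_expr a b].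

(* parameters (mu, beta, c, d) as variables 0..3n of a polynomial *)
Definition param_env (mu beta c : 'I_n -> R) (d : R) (k : nat) : R :=
  if (k < n)%N then oapp mu 0 (insub k : option 'I_n)
  else if (k < 2 * n)%N then oapp beta 0 (insub (k - n)%N : option 'I_n)
  else if (k < 3 * n)%N then oapp c 0 (insub (k - 2 * n)%N : option 'I_n)
  else if k == (3 * n)%N then d else 0.

End Systems.

Definition lam_group : pred nat := pred1 0%N.
Definition x_group (n : nat) : pred nat := fun i => (0 < i <= n)%N.

(* Main.v *)
Require Import Defs.
From HB Require Import structures.
From mathcomp Require Import all_boot all_order all_algebra all_fingroup all_field.
From mathcomp Require Import ring.
Import Order.TTheory GRing.Theory Num.Theory.
Local Open Scope ring_scope.


Lemma coef0_XaddC (R : comNzRingType) (a : R) n : (('X + a%:P)^+n)`_0 = a ^+ n.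
Proof.
elim: n => [|n IH]; first by rewrite !expr0 coefC.
by rewrite exprSr mulrDr coefD coefMX coefMC IH /= add0r exprSr.
Qed.

Lemma coef1_XaddC (R : comNzRingType) (a : R) n :
  (('X + a%:P)^+n)`_1 = a ^+ n.-1 *+ n.
Proof.
elim: n => [|n IH]; first by rewrite !expr0 coefC.
rewrite exprSr mulrDr coefD coefMX coefMC /= coef0_XaddC IH.
move: IH; case: n => [|n] _; first by rewrite expr0 mulr0n mul0r addr0 mulr1n.
by rewrite /= mulrnAl -exprSr -mulrS.
Qed.

Lemma bezout_core (C : nzRingType) n k (F : 'I_n -> pexpr C) (L : pexpr C) :
  (1 <= n)%N ->
  (forall i, pdeg lam_group (F i) = 1%N) -> (forall i, pdeg (x_group n) (F i) = k) ->
  pdeg lam_group L = 0%N -> pdeg (x_group n) L = 1%N ->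
  bezout2 ([seq F i | i <- enum 'I_n] ++ [:: L]) lam_group (x_group n) 1 n
   = (n * k ^ (n - 1))%N%:Z.
Proof.
move=> n1 F1 Fk L0 L1; rewrite /bezout2 big_cat big_map big_seq1 L0 L1.
under eq_bigr do rewrite F1 Fk.
rewrite big_enum prodr_const card_ord /= mul0r add0r mul1r.
set Y := ('X : {poly int})%:P.
have -> : (k%:R * Y : {poly {poly int}}) = (k%:R * 'X)%:P by rewrite polyCM polyC_natr.
rewrite mul1r /Y coefMC coef1_XaddC.
clear F F1 Fk L1; case: n n1 => // n _; rewrite subn1 succnK.
have -> : ((k%:R * 'X) ^+ n *+ n.+1 * 'X : {poly int}) = 'X^(n.+1) *+ (k ^ n * n.+1)%N.
  by rewrite exprSr exprMn -natrX mulr_natl -mulrnA mulrnAl.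
rewrite coefMn coefXn eqxx.
by rewrite mulnC -natz.
Qed.

Section Deg.
Variable C : nzRingType.

Lemma pdeg_ppow g (p : pexpr C) k : pdeg g (ppow p k) = (k * pdeg g p)%N.
Proof. by elim: k => [|k IH] //=; rewrite /ppow /= -/(ppow p k) IH mulSn addnC. Qed.

Lemma pdeg_foldrMul g (l : seq (pexpr C)) :
  pdeg g (foldr PMul (PConst 1) l) = sumn (map (pdeg g) l).
Proof. by elim: l => //= p l ->. Qed.

Lemma pdeg_foldrAdd g (T : Type) (F : T -> pexpr C) (s : seq T) d :
  (forall x, pdeg g (F x) = d) ->
  pdeg g (foldr PAdd (PConst 0) (map F s)) = if s is [::] then 0%N else d.
Proof.
move=> H; elim: s => //= x s IH; rewrite H IH.
by case: s {IH} => [|? ?]; rewrite ?maxn0 ?maxnn.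
Qed.

Lemma pdeg_lin_lam n (a : 'I_n -> C) b : pdeg lam_group (lin_expr a b) = 0%N.
Proof. by rewrite /lin_expr; elim: (enum 'I_n) => //= i s ->. Qed.

Lemma pdeg_lin_x n (a : 'I_n -> C) b : (1 <= n)%N -> pdeg (x_group n) (lin_expr a b) = 1%N.
Proof.
move=> n1; rewrite /lin_expr.
have : enum 'I_n != [::].
  case: n n1 {a} => // n _; apply/eqP => E.
  by have := mem_enum 'I_n.+1 ord0; rewrite E.
suff H : forall s : seq 'I_n, pdeg (x_group n)
   (foldr (fun i p => PAdd (PMul (PConst (a i)) (PVar (val i).+1)) p) (PConst b) s) = (s != [::]).
  by move=> ne; rewrite H ne.
elim => //= i s ->.
have -> : x_group n i.+1 by rewrite /x_group /= ltn_ord.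
by case: s.
Qed.
End Deg.

Lemma bezQ (C : nzRingType) n m (mu beta c : 'I_n -> C) d : (1 <= n)%N ->
  bezout2 (Qsys m mu beta c d) lam_group (x_group n) 1 n = (n * (m - 1) ^ (n - 1))%N%:Z.
Proof.
move=> n1; apply: bezout_core => //.
- by move=> i; rewrite /= pdeg_ppow /= muln0 maxn0.
- by move=> i; rewrite /= pdeg_ppow /= /x_group /= ltn_ord muln1 !maxn0.
- exact: pdeg_lin_lam.
- exact: pdeg_lin_x.
Qed.

Lemma pdeg_tensor_lam (C : nzRingType) n m (A : {ffun 'I_m -> 'I_n} -> C) k j :
  pdeg lam_group (tensor_apply A k j) = 0%N.
Proof.
rewrite /tensor_apply (@pdeg_foldrAdd _ _ _ _ _ 0%N); first by case: (filter _ _).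
move=> f /=; rewrite pdeg_foldrMul.
by elim: (filter _ _) => //= r s ->.
Qed.

Lemma pdeg_tensor_x (C : nzRingType) n m (A : {ffun 'I_m -> 'I_n} -> C) k j :
  (1 <= k <= m)%N ->
  pdeg (x_group n) (tensor_apply A k j) = (m - 1)%N.
Proof.
move=> /andP[k1 km].
rewrite /tensor_apply (@pdeg_foldrAdd _ _ _ _ _ (m - 1)%N).
  have : [ffun=> j] \in filter (fun f : {ffun 'I_m -> 'I_n} =>
         [forall r : 'I_m, ((val r).+1 == k) ==> (f r == j)]) (enum {ffun 'I_m -> 'I_n}).
    rewrite mem_filter mem_enum andbT; apply/forallP => r; by rewrite ffunE eqxx implybT.
  by case: (filter _ _).
move=> f /=; rewrite pdeg_foldrMul.
have -> : forall s : seq 'I_m, sumn [seq pdeg (R:=C) (x_group n) p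
    | p <- [seq PVar (R:=C) (val (f r)).+1 | r <- s]] = size s.
  by elim => //= r s ->; rewrite /x_group /= ltn_ord.
rewrite size_filter.
have E : count (fun r : 'I_m => (val r).+1 == k) (enum 'I_m) = 1%N.
  have km1 : (k.-1 < m)%N by case: k k1 km.
  rewrite (eq_count (a2 := pred1 (Ordinal km1))).
    by rewrite count_uniq_mem ?enum_uniq // mem_enum.
  move=> r /=; apply/eqP/eqP => [E|->] /=; first by apply: val_inj => /=; rewrite -E.
  by rewrite prednK.
have := count_predC (fun r : 'I_m => (val r).+1 == k) (enum 'I_m).
rewrite E size_enum_ord add1n => H.
have -> : count (fun r : 'I_m => (val r).+1 != k) (enum 'I_m)
  = count (predC (fun r : 'I_m => (val r).+1 == k)) (enum 'I_m) by [].
by rewrite add0n -[X in _ = (X - 1)%N]H subn1.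
Qed.

Lemma bezG (C : nzRingType) n m (A B : {ffun 'I_m -> 'I_n} -> C) k a b :
  (1 <= n)%N -> (2 <= m)%N -> (1 <= k <= m)%N ->
  bezout2 (Gsys A B k a b) lam_group (x_group n) 1 n = (n * (m - 1) ^ (n - 1))%N%:Z.
Proof.
move=> n1 m2 km; apply: bezout_core => //.
- by move=> i; rewrite /= !pdeg_tensor_lam.
- move=> i; rewrite /= !pdeg_tensor_x //; last by rewrite leqnn (ltnW m2).
  by rewrite maxnn.
- exact: pdeg_lin_lam.
- exact: pdeg_lin_x.
Qed.

Set Implicit Arguments. Unset Strict Implicit. Unset Printing Implicit Defensive.

Section Eval.
Variable C : comNzRingType.
Implicit Types env : nat -> C.

Lemma peval_ppow env (p : pexpr C) k : peval env (ppow p k) = peval env p ^+ k.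
Proof. by elim: k => [|k IH] //=; rewrite -/(ppow p k) IH exprS. Qed.

Lemma peval_dppow env j (p : pexpr C) k :
  peval env (pderiv j (ppow p k)) = (k%:R * peval env p ^+ k.-1) * peval env (pderiv j p).
Proof.
elim: k => [|k IH]; first by rewrite /= mul0r mul0r.
rewrite /= -/(ppow p k) IH peval_ppow.
case: k {IH} => [|k]; first by rewrite /= !expr0; ring.
by rewrite /= !exprS; ring.
Qed.

Lemma peval_lin env n (a : 'I_n -> C) b :
  peval env (lin_expr a b) = b + \sum_i a i * env (val i).+1.
Proof.
rewrite /lin_expr -big_enum /=; elim: (enum 'I_n) => [|i s IH] /=.
  by rewrite big_nil addr0.
by rewrite IH big_cons addrCA.
Qed.

Lemma peval_dlin env n (a : 'I_n -> C) b j :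
  peval env (pderiv j (lin_expr a b)) = \sum_i a i * (if (val i).+1 == j then 1 else 0).
Proof.
rewrite /lin_expr -big_enum /=; elim: (enum 'I_n) => [|i s IH] /=.
  by rewrite big_nil.
by rewrite IH big_cons mul0r add0r.
Qed.

End Eval.

Lemma roots_exist (C : numClosedFieldType) (K : nat) (b : C) : b != 0 ->
  exists rs : seq C, [/\ uniq rs, size rs = K.+1 &
    forall x, (x \in rs) = (x ^+ K.+1 == b)].
Proof.
move=> b0.
have [r Er] := closed_field_poly_normal ('X^(K.+1) - 1 : {poly C}).
have mon : ('X^(K.+1) - 1 : {poly C}) \is monic by rewrite -polyC1 monicXnsubC.
rewrite (monicP mon) scale1r in Er.
have Ur : uniq r.
  rewrite -separable_prod_XsubC -Er separable_Xn_sub_1 //.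
  by rewrite pnatr_eq0.
have Sr : size r = K.+1.
  by apply: succn_inj; rewrite -(size_prod_XsubC r id) -Er size_Xn_sub_1.
have Mr : forall u, (u \in r) = (u ^+ K.+1 == 1).
  move=> u; rewrite -root_prod_XsubC -Er rootE !hornerE subr_eq0.
  by [].
pose w := K.+1.-root b.
have wK : w ^+ K.+1 = b by rewrite /w rootCK.
have w0 : w != 0 by apply: contraNneq b0 => E; rewrite -wK E expr0n.
exists [seq w * u | u <- r]; split.
- by rewrite map_inj_uniq // ; exact: mulfI.
- by rewrite size_map.
- move=> x; apply/mapP/eqP => [[u ur ->]|xb].
    by rewrite exprMn wK (eqP _ : u ^+ K.+1 = 1) ?mulr1 // -Mr.
  exists (x / w); last by rewrite mulrC divfK.
  by rewrite Mr expr_div_n xb wK divff.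
Qed.

Section Det.
Variable C : comNzRingType.

Lemma peval_sumP env (T : Type) (F : T -> pexpr C) s :
  peval env (foldr PAdd (PConst 0) (map F s)) = \sum_(x <- s) peval env (F x).
Proof. by elim: s => [|x s IH] /=; rewrite ?big_nil ?big_cons ?IH. Qed.

Lemma peval_prodP env (T : Type) (F : T -> pexpr C) s :
  peval env (foldr PMul (PConst 1) (map F s)) = \prod_(x <- s) peval env (F x).
Proof. by elim: s => [|x s IH] /=; rewrite ?big_nil ?big_cons ?IH. Qed.

Definition detP N (E : 'I_N -> 'I_N -> pexpr C) : pexpr C :=
  foldr PAdd (PConst 0) [seq PMul (PConst ((-1) ^+ s)) (foldr PMul (PConst 1)
     [seq E i (s i) | i <- enum 'I_N]) | s : {perm 'I_N} <- enum {perm 'I_N}].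

Lemma peval_detP env N (E : 'I_N -> 'I_N -> pexpr C) :
  peval env (detP E) = \det (\matrix_(i, j) peval env (E i j)).
Proof.
rewrite /detP peval_sumP big_enum /=; apply: eq_bigr => s _ /=.
rewrite peval_prodP big_enum /=; congr (_ * _); apply: eq_bigr => i _.
by rewrite mxE.
Qed.
End Det.

From mathcomp Require Import zify.
Section Param.
Variables (R : nzRingType) (n : nat) (mu beta c : 'I_n -> R) (d : R).
Local Notation pe := (param_env mu beta c d).

Lemma pe_mu (i : 'I_n) : pe i = mu i.
Proof. by rewrite /param_env ltn_ord valK. Qed.

Lemma pe_beta (i : 'I_n) : pe (n + i) = beta i.
Proof.
have i_n := ltn_ord i.
rewrite /param_env ifF; last by apply/negbTE; rewrite -leqNgt; lia.
rewrite ifT; last by lia.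
by rewrite addKn valK.
Qed.

Lemma pe_c (i : 'I_n) : pe (2 * n + i) = c i.
Proof.
have i_n := ltn_ord i.
rewrite /param_env ifF; last by apply/negbTE; rewrite -leqNgt; lia.
rewrite ifF; last by apply/negbTE; rewrite -leqNgt; lia.
rewrite ifT; last by lia.
by rewrite addKn valK.
Qed.

Lemma pe_d : pe (3 * n) = d.
Proof.
rewrite /param_env ifF; last by apply/negbTE; rewrite -leqNgt; lia.
rewrite ifF; last by apply/negbTE; rewrite -leqNgt; lia.
by rewrite ltnn eqxx.
Qed.
End Param.

Section Gen.
Variables (C : numClosedFieldType) (n K : nat).
Local Notation T := {ffun 'I_n -> 'I_K.+1}.

Definition nxt (j : 'I_n) (t : T) : T :=
  [ffun l => if l == j then (if ((t j).+1 < K.+1)%N then inord (t j).+1 else ord0) else t l].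
Definition ecoef (be : 'I_n -> C) j (t : T) : C := if ((t j).+1 < K.+1)%N then 1 else be j.
Definition Lfun (be c : 'I_n -> C) (d : C) (a g : T) : C :=
  (a == g)%:R * d + \sum_j c j * (ecoef be j a * (g == nxt j a)%:R).
Definition Lexpr (a g : T) : pexpr C :=
  PAdd (PMul (PConst (a == g)%:R) (PVar (3 * n)))
   (foldr PAdd (PConst 0) [seq PMul (PVar (2 * n + j))
      (PMul (if ((a j).+1 < K.+1)%N then PConst 1 else PVar (n + j))
            (PConst (g == nxt j a)%:R)) | j : 'I_n <- enum 'I_n]).

Definition Pgen : pexpr C := detP (fun i j : 'I_#|T| => Lexpr (enum_val i) (enum_val j)).
Definition Mgen be c d : 'M[C]_#|T| := \matrix_(i, j) Lfun be c d (enum_val i) (enum_val j).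

Lemma peval_Pgen (mu be c : 'I_n -> C) d :
  peval (param_env mu be c d) Pgen = \det (Mgen be c d).
Proof.
rewrite /Pgen peval_detP; congr (\det _); apply/matrixP => i j; rewrite !mxE.
rewrite /Lexpr /Lfun /= pe_d mulrC; congr (_ + _).
rewrite peval_sumP big_enum /=; apply: eq_bigr => l _ /=.
rewrite pe_c /ecoef; case: ifP => //= _; by rewrite pe_beta.
Qed.

Definition V (r : 'I_n -> C) (t : T) : C := \prod_j r j ^+ t j.

Lemma V_nxt (be r : 'I_n -> C) j t : (forall j, r j ^+ K.+1 = be j) ->
  ecoef be j t * V r (nxt j t) = r j * V r t.
Proof.
move=> rb; rewrite /V /ecoef (bigD1 j) //= (bigD1 j (P := predT)) //=.
rewrite ffunE eqxx.
have -> : \prod_(i | i != j) r i ^+ nxt j t i = \prod_(i | i != j) r i ^+ t i.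
  by apply: eq_bigr => i /negbTE ij; rewrite ffunE ij.
case: ifP => H.
  by rewrite inordK // mul1r exprS mulrA.
have tK : val (t j) = K.
  change (nat_of_ord (t j) = K); by have := ltn_ord (t j); move/negbT: H; rewrite -leqNgt; lia.
by rewrite expr0 mul1r -rb tK exprS mulrA.
Qed.

Lemma key_det (be c r : 'I_n -> C) d : (forall j, r j ^+ K.+1 = be j) ->
  d + \sum_j c j * r j = 0 -> \det (Mgen be c d) = 0.
Proof.
move=> rb lin; rewrite -det_tr; apply/eqP/det0P.
exists (\row_i V r (enum_val i)).
  apply/eqP => /rowP /(_ (enum_rank [ffun=> ord0])); rewrite !mxE enum_rankK.
  rewrite /V; under eq_bigr do rewrite ffunE expr0.
  by rewrite big1 // => /eqP; rewrite oner_eq0.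
apply/rowP => a; rewrite !mxE.
have Hs : forall (F : T -> C) (g : T),
    \sum_(i < #|T|) F (enum_val i) * (enum_val i == g)%:R = F g.
  move=> F g; rewrite (bigD1 (enum_rank g)) //= enum_rankK eqxx mulr1 big1 ?addr0 //.
  move=> i ig; rewrite (_ : (enum_val i == g) = false) ?mulr0 //.
  by apply/negbTE; apply: contra ig => /eqP <-; rewrite enum_valK.
transitivity (\sum_(i < #|T|) (V r (enum_val i) * ((enum_val a == enum_val i)%:R * d) +
   \sum_j c j * ecoef be j (enum_val a) *
       (V r (enum_val i) * (enum_val i == nxt j (enum_val a))%:R))).
  apply: eq_bigr => i _; rewrite !mxE /Lfun mulrDr mulr_sumr; congr (_ + _).
  by apply: eq_bigr => j _; ring.
rewrite big_split /= exchange_big /=.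
have -> : \sum_(i < #|T|) V r (enum_val i) * ((enum_val a == enum_val i)%:R * d)
     = d * V r (enum_val a).
  rewrite -(Hs (fun t => d * V r t)); apply: eq_bigr => i _.
  by rewrite eq_sym; ring.
have -> : \sum_(j < n) \sum_(i < #|T|) c j * ecoef be j (enum_val a) *
        (V r (enum_val i) * (enum_val i == nxt j (enum_val a))%:R)
   = \sum_j c j * r j * V r (enum_val a).
  apply: eq_bigr => j _; rewrite -mulr_sumr (Hs (V r)) -mulrA V_nxt //.
  by rewrite mulrA.
by rewrite -mulr_suml -mulrDl lin mul0r.
Qed.
End Gen.

Lemma Mgen_id (C : numClosedFieldType) n K (be : 'I_n -> C) :
  \det (Mgen K be (fun _ => 0) 1) = 1.
Proof.
rewrite (_ : Mgen _ _ _ _ = 1%:M) ?det1 //; apply/matrixP => i j.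
rewrite !mxE /Lfun big1 ?addr0 ?mulr1; last by move=> l _; rewrite mul0r.
by rewrite (inj_eq enum_val_inj).
Qed.

Section Pt.
Variables (C : nzRingType) (n : nat).
Definition mkpt (l : C) (x : 'I_n -> C) : 'rV[C]_n.+1 :=
  \row_t oapp x l (unlift ord0 t).

Lemma pt0 l x : pt_env (mkpt l x) 0 = l.
Proof.
rewrite /pt_env /= mxE (_ : inord 0 = ord0) ?unlift_none //.
by apply: val_inj; rewrite /= inordK.
Qed.

Lemma ptS l x (j : 'I_n) : pt_env (mkpt l x) (val j).+1 = x j.
Proof.
rewrite /pt_env ltnS ltn_ord mxE (_ : inord (val j).+1 = lift ord0 j) ?liftK //.
by apply: val_inj; rewrite /= inordK // ltnS ltn_ord.
Qed.

Lemma mk_eta (z : 'rV[C]_n.+1) :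
  z = mkpt (pt_env z 0) (fun j => pt_env z (val j).+1).
Proof.
apply/rowP => t; rewrite mxE; case: unliftP => [j ->|->] /=.
  rewrite /pt_env ltnS ltn_ord; congr (z _ _); apply: val_inj.
  by rewrite /= inordK // ltnS ltn_ord.
by rewrite /pt_env /=; congr (z _ _); apply: val_inj; rewrite /= inordK.
Qed.
End Pt.

Section QS.
Variables (C : comNzRingType) (n K : nat) (mu beta c : 'I_n -> C) (d : C).
Local Notation Q := (Qsys K.+2 mu beta c d).

Lemma size_Q : size Q = n.+1.
Proof. by rewrite size_cat size_map size_enum_ord addn1. Qed.

Lemma nth_Q (i : 'I_n) : nth (PConst 0) Q i =
  PMul (PAdd (PVar 0) (PConst (- mu i)))
       (PAdd (ppow (PVar (val i).+1) K.+1) (PConst (- beta i))).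
Proof.
rewrite nth_cat size_map size_enum_ord ltn_ord (nth_map i) ?size_enum_ord //.
by rewrite nth_ord_enum subn1.
Qed.

Lemma nth_Qn : nth (PConst 0) Q n = lin_expr c d.
Proof. by rewrite nth_cat size_map size_enum_ord ltnn subnn. Qed.

Lemma eval_Q env (i : 'I_n) : peval env (nth (PConst 0) Q i) =
  (env 0%N - mu i) * (env (val i).+1 ^+ K.+1 - beta i).
Proof. by rewrite nth_Q /= peval_ppow -exprS. Qed.

Lemma eval_dQ env (i : 'I_n) s : peval env (pderiv s (nth (PConst 0) Q i)) =
  (if 0%N == s then 1 else 0) * (env (val i).+1 ^+ K.+1 - beta i) +
  (env 0%N - mu i) * (K.+1%:R * env (val i).+1 ^+ K * (if (val i).+1 == s then 1 else 0)).
Proof. rewrite nth_Q; cbn -[ppow]; rewrite peval_dppow peval_ppow /=. by rewrite !addr0. Qed.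

Lemma is_zeroQ (z : 'rV[C]_n.+1) : is_zero Q z <->
  (forall i : 'I_n, (pt_env z 0 - mu i) * (pt_env z (val i).+1 ^+ K.+1 - beta i) = 0)
  /\ d + \sum_i c i * pt_env z (val i).+1 = 0.
Proof.
split => [H | [H1 H2] r].
  split; last by have := H n; rewrite size_Q nth_Qn peval_lin => ->.
  by move=> i; have := H i; rewrite size_Q ltnS ltnW // eval_Q => ->.
rewrite size_Q ltnS leq_eqVlt => /orP[/eqP ->|rn].
  by rewrite nth_Qn peval_lin.
by have := eval_Q (pt_env z) (Ordinal rn) => /= ->.
Qed.
End QS.

Lemma card_fib n K (i : 'I_n) :
  #|[pred f : {ffun 'I_n -> 'I_K.+1} | f i == ord0]| = (K.+1 ^ n.-1)%N.
Proof.
rewrite (eq_card (B := pffun_on ord0 (predC1 i) (@predT 'I_K.+1))).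
  by rewrite card_pffun_on card_ord cardC1 card_ord.
move=> f; rewrite !inE; apply/idP/pffun_onP => [fi | [sup _]].
  split; last by move=> y _.
  apply/subsetP => x; rewrite !inE; apply: contraNneq => ->; by rewrite (eqP fi).
by have := subsetP sup i; rewrite !inE eqxx => H; apply/negPn; apply/negP => /H.
Qed.

Lemma card_Dom n K :
  #|[pred p : 'I_n * {ffun 'I_n -> 'I_K.+1} | p.2 p.1 == ord0]| = (n * K.+1 ^ n.-1)%N.
Proof.
rewrite -sum1_card.
rewrite (eq_bigl (fun p : 'I_n * {ffun 'I_n -> 'I_K.+1} => true && (p.2 p.1 == ord0))) //.
rewrite -(pair_big_dep xpredT (fun i (f : {ffun 'I_n -> 'I_K.+1}) => f i == ord0)
   (fun _ _ => 1%N)) /=.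
rewrite (eq_bigr (fun _ => K.+1 ^ n.-1)%N); last first.
  by move=> i _; rewrite -(@card_fib n K i) -sum1_card.
by rewrite sum_nat_const card_ord.
Qed.

Lemma mkpt_ext (C : nzRingType) n (l : C) (x y : 'I_n -> C) :
  (forall j, x j = y j) -> mkpt l x = mkpt l y.
Proof. by move=> E; apply/rowP => t; rewrite !mxE; case: (unlift _ _) => //=. Qed.

Lemma sum_pick (C : nzRingType) n (F : 'I_n -> C) (j : 'I_n) :
  \sum_(l < n) F l * (if (val l).+1 == (val j).+1 then 1 else 0) = F j.
Proof.
rewrite (bigD1 j) //= eqxx mulr1 big1 ?addr0 // => l lj.
by rewrite eqSS (inj_eq val_inj) (negbTE lj) mulr0.
Qed.

Section Main.
Variables (C : numClosedFieldType) (n K : nat).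
Hypothesis n1 : (1 <= n)%N.
Local Notation T := {ffun 'I_n -> 'I_K.+1}.

Lemma part1 : exists P : pexpr C,
     (exists (mu0 beta0 c0 : 'I_n -> C) (d0 : C),
        peval (param_env mu0 beta0 c0 d0) P != 0) /\
     forall (mu beta c : 'I_n -> C) (d : C),
       (forall i, mu i != 0) -> (forall i, beta i != 0) ->
       (forall i, c i != 0) -> d != 0 -> injective mu ->
       peval (param_env mu beta c d) P != 0 ->
       exists s : seq 'rV[C]_n.+1,
         [/\ uniq s, size s = (n * (K.+2 - 1) ^ (n - 1))%N,
             (forall z, is_zero (Qsys K.+2 mu beta c d) z <-> z \in s)
           & forall z, z \in s -> jacobian (Qsys K.+2 mu beta c d) z \in unitmx].
Proof.
exists (Pgen C n K); split.
  exists (fun _ => 0), (fun _ => 1), (fun _ => 0), 1.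
  by rewrite peval_Pgen Mgen_id oner_neq0.
move=> mu beta c d mu0 be0 c0 d0 muI Pnz; rewrite peval_Pgen in Pnz.
have keyL : forall r : 'I_n -> C, (forall j, r j ^+ K.+1 = beta j) ->
    d + \sum_j c j * r j != 0.
  by move=> r rb; apply: contra Pnz => /eqP H; apply/eqP; exact: key_det rb H.
have [R HR] := fin_all_exists (fun j => roots_exist K (be0 j)).
pose rt j (a : 'I_K.+1) := nth 0 (R j) a.
have rt_pow : forall j a, rt j a ^+ K.+1 = beta j.
  move=> j a; have [_ S M] := HR j; apply/eqP; rewrite -M mem_nth // S ltn_ord //.
have rt_inj : forall j, injective (rt j).
  move=> j a b; have [U S _] := HR j; move/eqP; rewrite /rt nth_uniq ?S ?ltn_ord //.
  by move/eqP/val_inj.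
pose xs i (f : T) j := if j == i then - (d + \sum_(l | l != i) c l * rt l (f l)) / c i
                       else rt j (f j).
pose sol (p : 'I_n * T) := mkpt (mu p.1) (xs p.1 p.2).
pose Dom := [pred p : 'I_n * T | p.2 p.1 == ord0].
have linsol : forall i f, d + \sum_l c l * xs i f l = 0.
  move=> i f; rewrite (bigD1 i) //=.
  have E : \sum_(l | l != i) c l * xs i f l = \sum_(l | l != i) c l * rt l (f l).
    by apply: eq_bigr => l /negbTE li; rewrite /xs /= li.
  rewrite E /xs eqxx [c i * _]mulrC divfK //; ring.
have sol_zero : forall p, is_zero (Qsys K.+2 mu beta c d) (sol p).
  move=> [i f]; apply/is_zeroQ; rewrite /sol /= pt0; split.
    move=> j; rewrite ptS /xs; case: eqP => [->|_]; first by rewrite subrr mul0r.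
    by rewrite rt_pow subrr mulr0.
  by under eq_bigr do rewrite ptS; exact: linsol.
have notroot : forall i f, xs i f i ^+ K.+1 != beta i.
  move=> i f; apply/negP => /eqP H.
  suff: d + \sum_j c j * xs i f j != 0 by rewrite linsol eqxx.
  apply: keyL => j; case: (eqVneq j i) => [->//|ji].
  by rewrite /xs /= (negbTE ji).
exists [seq sol p | p <- enum Dom]; split.
- rewrite map_inj_in_uniq ?enum_uniq // => [[i f] [i' f']]; rewrite !mem_enum /=.
  move=> Hf Hf' E.
  have Ei : mu i = mu i' by have := congr1 (fun z => pt_env z 0) E; rewrite /sol /= !pt0.
  have ii := muI _ _ Ei; subst i'; congr pair; apply/ffunP => j.
  case: (eqVneq j i) => [->|ji]; first by rewrite (eqP Hf) (eqP Hf').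
  have := congr1 (fun z => pt_env z (val j).+1) E; rewrite /sol /= !ptS /xs (negbTE ji).
  exact: rt_inj.
- rewrite size_map -cardE card_Dom subSS subn0; by case: n n1 {mu0 be0 c0 muI keyL R HR rt rt_pow rt_inj xs sol Dom linsol sol_zero notroot Pnz} => // n' _; rewrite subn1.
- move=> z; split; last first.
    by move=> /mapP [p _ ->]; apply: sol_zero.
  move=> /is_zeroQ [H1 H2].
  pose lam := pt_env z 0; pose x j := pt_env z (@nat_of_ord n j).+1.
  case: (boolP [exists i, x i ^+ K.+1 != beta i]) => [/existsP [i0 Hi0] | /existsPn Hall]; last first.
    exfalso; have Kx : d + \sum_j c j * x j != 0.
      by apply: keyL => j; apply/eqP; have := Hall j; rewrite negbK.
    by move/eqP: Kx => Kx; apply: Kx; exact: H2.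
  have lam0 : lam = mu i0.
    have := H1 i0; move/eqP; rewrite mulf_eq0 (negbTE (_ : x i0 ^+ K.+1 - beta i0 != 0)).
      by rewrite orbF subr_eq0 => /eqP.
    by rewrite subr_eq0.
  have hx : forall j, j != i0 -> x j ^+ K.+1 = beta j.
    move=> j ji; have := H1 j; move/eqP; rewrite mulf_eq0.
    rewrite (negbTE (_ : lam - mu j != 0)) /=; first by rewrite subr_eq0 => /eqP.
    by rewrite subr_eq0 lam0 (inj_eq muI) eq_sym.
  pose f : T := [ffun j => if j == i0 then ord0 else inord (index (x j) (R j))].
  have rtf : forall j, j != i0 -> rt j (f j) = x j.
    move=> j ji; have [_ S M] := HR j.
    have xR : x j \in R j by rewrite M hx.
    rewrite /rt ffunE (negbTE ji) inordK ?nth_index // -S index_mem //.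
  have Ez : z = sol (i0, f).
    rewrite {1}(mk_eta z) /sol /= -/lam lam0; apply: mkpt_ext => j.
    case: (eqVneq j i0) => [->|ji]; last by rewrite /xs /= (negbTE ji) rtf.
    rewrite /xs /= eqxx.
    have E : \sum_(l | l != i0) c l * rt l (f l) = \sum_(l | l != i0) c l * x l.
      by apply: eq_bigr => l li; rewrite rtf.
    rewrite E; apply: (mulIf (c0 i0)); rewrite divfK //.
    apply/eqP; rewrite -subr_eq0; apply/eqP.
    move: H2; rewrite (bigD1 i0) //= => H2.
    transitivity (d + (c i0 * x i0 + \sum_(i | i != i0) c i * x i)); last exact: H2.
    by rewrite -/(x i0) opprK mulrC addrCA addrA.
  by rewrite Ez; apply: map_f; rewrite mem_enum inE /= /f ffunE eqxx.
- move=> z /mapP [[i f] pD ->]; rewrite mem_enum inE /= in pD.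
  rewrite unitmxE unitfE; apply/negP => /det0P [v v0 vJ].
  set J := jacobian _ _ in vJ.
  set env := pt_env (sol (i, f)).
  have env0 : env 0%N = mu i by rewrite /env /sol /= pt0.
  have envS : forall j : 'I_n, env (val j).+1 = xs i f j by move=> j; rewrite /env /sol /= ptS.
  have hx : forall j, j != i -> xs i f j ^+ K.+1 = beta j.
    by move=> j ji; rewrite /xs /= (negbTE ji) rt_pow.
  pose w (j : 'I_n) := v 0 (widen_ord (leqnSn n) j).
  pose vn := v 0 ord_max.
  have colE : forall s : 'I_n.+1, 0 = \sum_(j < n) w j *
        peval env (pderiv s (nth (PConst 0) (Qsys K.+2 mu beta c d) j))
      + vn * peval env (pderiv s (lin_expr c d)).
    move=> s; transitivity ((v *m J) 0 s); first by rewrite vJ mxE.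
    rewrite mxE big_ord_recr /=; congr (_ + _); first by apply: eq_bigr => j _; rewrite mxE.
    by rewrite mxE nth_Qn.
  have E0 : w i * (xs i f i ^+ K.+1 - beta i) = 0.
    have := colE ord0; rewrite peval_dlin [X in vn * X]big1; last by move=> j _; rewrite /= mulr0.
    rewrite mulr0 addr0 (bigD1 i) //= big1 ?addr0.
      by rewrite eval_dQ /= !mulr0 addr0 mul1r envS => <-.
    by move=> j ji; rewrite eval_dQ /= !mulr0 addr0 mul1r envS hx // subrr mulr0.
  have EJ : forall j : 'I_n, w j * ((mu i - mu j) * (K.+1%:R * xs i f j ^+ K)) + vn * c j = 0.
    move=> j; have := colE (lift ord0 j); rewrite peval_dlin !lift0.
    rewrite (eq_bigr (fun l => w l * ((mu i - mu l) * (K.+1%:R * xs i f l ^+ K))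
       * (if (val l).+1 == (val j).+1 then 1 else 0))).
      by rewrite sum_pick (sum_pick c) => ->.
    move=> l _; rewrite eval_dQ /= mul0r add0r env0 envS; case: ifP => _.
      by rewrite !mulr1.
    by rewrite !mulr0.
  have vn0 : vn = 0.
    have := EJ i; rewrite subrr mul0r mulr0 add0r => /eqP; rewrite mulf_eq0 (negbTE (c0 i)) orbF.
    by move/eqP.
  have wi0 : w i = 0.
    by move/eqP: E0; rewrite mulf_eq0 subr_eq0 (negbTE (notroot i f)) orbF => /eqP.
  have wj0 : forall j, w j = 0.
    move=> j; case: (eqVneq j i) => [->//|ji].
    move/eqP: (EJ j); rewrite vn0 mul0r addr0 !mulf_eq0 => /orP[/eqP//|].
    have xj0 : xs i f j != 0.
      by apply: contra (be0 j) => /eqP x0; rewrite -hx // x0 expr0n.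
    rewrite subr_eq0 (inj_eq muI) eq_sym (negbTE ji) /= pnatr_eq0 /= expf_eq0 (negbTE xj0).
    by rewrite andbF.
  apply: (negP v0); apply/eqP/rowP => t; rewrite !mxE.
  have [tn|tn] := ltnP t n.
    by have := wj0 (Ordinal tn); rewrite /w; congr (v 0 _ = _); apply: val_inj.
  have -> : t = ord_max by apply: val_inj => /=; apply/eqP; rewrite eqn_leq tn -ltnS ltn_ord.
  exact: vn0.
Qed.
End Main.

Theorem mainTheorem5 (C : numClosedFieldType) (n m : nat) :
  (1 <= n)%N -> (2 <= m)%N ->
  [/\
   (* generic (mu, beta, c, d): solution count and nonsingularity *)
   exists P : pexpr C,
     (exists (mu0 beta0 c0 : 'I_n -> C) (d0 : C),
        peval (param_env mu0 beta0 c0 d0) P != 0) /\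
     forall (mu beta c : 'I_n -> C) (d : C),
       (forall i, mu i != 0) -> (forall i, beta i != 0) ->
       (forall i, c i != 0) -> d != 0 -> injective mu ->
       peval (param_env mu beta c d) P != 0 ->
       exists s : seq 'rV[C]_n.+1,
         [/\ uniq s, size s = (n * (m - 1) ^ (n - 1))%N,
             (forall z, is_zero (Qsys m mu beta c d) z <-> z \in s)
           & forall z, z \in s -> jacobian (Qsys m mu beta c d) z \in unitmx],
   (* 2-homogeneous Bezout number of Q *)
   (forall (mu beta c : 'I_n -> C) (d : C),
       bezout2 (Qsys m mu beta c d) lam_group (x_group n) 1 n
       = (n * (m - 1) ^ (n - 1))%N%:Z)
  & (* 2-homogeneous Bezout number of G *)
   (forall (A B : {ffun 'I_m -> 'I_n} -> C) (k : nat) (a : 'I_n -> C) (b : C),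
       (1 <= k <= m)%N ->
       bezout2 (Gsys A B k a b) lam_group (x_group n) 1 n
       = (n * (m - 1) ^ (n - 1))%N%:Z)].
Proof.
move=> n1 m2; split.
- case: m m2 => [|[|K]] // _; exact: part1.
- by move=> mu beta c d; apply: bezQ.
- by move=> A B k a b km; apply: bezG.
Qed.
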